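(* Let $S$ be a finite non-abelian simple group and let $p$ be a prime with $\gcd(|S|,p)=1$. Then $S\times\mathbb{Z}_p$ is $\psi$-normal divisible. In particular, for every prime $p$ with $\gcd(60,p)=1$, the group $A_5\times\mathbb{Z}_p$ is $\psi$-normal divisible.
   Context: For a finite group $G$, $\psi(G)=\sum_{x\in G} o(x)$ denotes the sum of the orders of all elements of $G$. A finite group $G$ is called $\psi$-normal divisible if $\psi(H)$ divides $\psi(G)$ for every normal subgroup $H$ of $G$. *)

(* Defs.v *)
From HB Require Import structures.
From mathcomp Require Import all_boot all_fingroup all_solvable all_algebra.
Set Implicit Arguments. Unset Strict Implicit. Unset Printing Implicit Defensive.

Local Open Scope group_scope.

Definition psi (gT : finGroupType) (G : {set gT}) : nat :=
  (\sum_(x in G) #[x])%N.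

Definition psi_normal_divisible (gT : finGroupType) (G : {set gT}) : Prop :=
  forall H : {group gT}, H <| G -> psi H %| psi G.

(* Main.v *)
Require Import Defs.
From HB Require Import structures.
From mathcomp Require Import all_boot all_fingroup all_solvable all_algebra.
From mathcomp Require Import zify.

Local Open Scope group_scope.

Section Aux.
Variables gT1 gT2 : finGroupType.

Lemma pairX (a : gT1) (b : gT2) n : (a, b) ^+ n = (a ^+ n, b ^+ n).
Proof.
elim: n => [|n IH]; first by [].
by rewrite !expgS IH.
Qed.

Lemma order_pair (a : gT1) (b : gT2) :
  coprime #[a] #[b] -> #[(a, b)] = (#[a] * #[b])%N.
Proof.
move=> co; apply/eqP; rewrite eqn_dvd; apply/andP; split.
  rewrite order_dvdn pairX expgM expg_order expg1n mulnC expgM expg_order expg1n.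
  by [].
rewrite Gauss_dvd // !order_dvdn.
have := expg_order (a, b); rewrite pairX => -[-> ->].
by rewrite !eqxx.
Qed.

Lemma psiX (A : {set gT1}) (B : {set gT2}) :
  {in A & B, forall a b, coprime #[a] #[b]} ->
  psi (setX A B) = (psi A * psi B)%N.
Proof.
move=> co; rewrite /psi big_distrl /=.
rewrite (eq_bigr (fun a => \sum_(b in B) #[(a, b)])); last first.
  move=> a aA; rewrite big_distrr /=; apply: eq_bigr => b bB.
  by rewrite order_pair ?co.
rewrite pair_big_dep /=; apply: eq_big => -[a b] //.
by rewrite in_setX.
Qed.

Lemma psi1 (gT : finGroupType) : psi [1 gT] = 1%N.
Proof. by rewrite /psi big_set1 order1. Qed.

Lemma main_aux (S : {group gT1}) (Z : {group gT2}) :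
  simple S -> prime #|Z| -> coprime #|S| #|Z| ->
  psi_normal_divisible (setX S Z).
Proof.
move=> simS prZ co H /andP[sHG nHG].
have coel : {in S & Z, forall a b, coprime #[a] #[b]}.
  move=> a b aS bZ; apply: (coprime_dvdl (order_dvdG aS)).
  exact: (coprime_dvdr (order_dvdG bZ)).
set A := pairg1 gT2 @*^-1 H.
set B := @pair1g gT1 gT2 @*^-1 H.
have inA a : (a \in A) = ((a, 1) \in H) by rewrite !inE.
have inB b : (b \in B) = ((1, b) \in H) by rewrite !inE.
have defH : H :=: setX A B.
  apply/setP => -[a b]; rewrite in_setX /= inA inB.
  apply/idP/idP => [Hab | /andP[Ha Hb]]; last first.
    suff -> : (a, b) = (a, 1) * (1, b) by exact: groupM.
    by change ((a, b) = (a * 1, 1 * b)); rewrite mulg1 mul1g.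
  have : (a, b) \in setX S Z by rewrite (subsetP sHG).
  rewrite in_setX /= => /andP[aS bZ].
  apply/andP; split.
    have := groupX (chinese #|S| #|Z| 1 0) Hab; rewrite pairX.
    rewrite -(expg_mod _ (expg_cardG aS)) chinese_modl // expg_mod ?expg_cardG //.
    by rewrite -(expg_mod _ (expg_cardG bZ)) chinese_modr // mod0n expg1.
  have := groupX (chinese #|S| #|Z| 0 1) Hab; rewrite pairX.
  rewrite -(expg_mod _ (expg_cardG aS)) chinese_modl // mod0n expg0.
  by rewrite -(expg_mod _ (expg_cardG bZ)) chinese_modr // expg_mod ?expg_cardG // expg1.
have preS : pairg1 gT2 @*^-1 (setX S Z) = S.
  by apply/setP => a; rewrite !inE group1 andbT.
have preZ : @pair1g gT1 gT2 @*^-1 (setX S Z) = Z.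
  by apply/setP => a; rewrite !inE group1.
have nAS : (A : {group gT1}) <| S.
  rewrite /normal -{1 2}preS morphpreS //= morphpre_norms //.
have sBZ : (B : {set gT2}) \subset Z by rewrite -preZ morphpreS.
have dA : psi A %| psi S.
  have [_ /(_ _ nAS) [E|E]] := simpleP _ simS.
    have E' : A = 1 := E.
    by rewrite E' psi1 dvd1n.
  have E' : A = S := E.
  by rewrite E'.
have dB : psi B %| psi Z.
  have := cardSg sBZ; case/primeP: prZ => _ /[apply] /orP[/eqP B1 | /eqP BZ].
    have E' : B = 1 := card_le1_trivg (eq_leq B1).
    by rewrite E' psi1 dvd1n.
  suff -> : (B : {set gT2}) = Z by [].
  by apply/eqP; rewrite eqEcard sBZ BZ leqnn.
rewrite defH !psiX //; first exact: dvdn_mul.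
move=> a b aA bB; apply: coel.
  by rewrite (subsetP (normal_sub nAS)).
by rewrite (subsetP sBZ).
Qed.

End Aux.

Theorem theorem3p1 :
  (forall (gT : finGroupType) (S : {group gT}) (p : nat),
      simple S -> ~~ abelian S -> prime p -> coprime #|S| p ->
      psi_normal_divisible (setX S (Zp p)))
  /\
  (forall p : nat, prime p -> coprime 60 p ->
      psi_normal_divisible (setX ('Alt_('I_5)) (Zp p))).
Proof.
have P1 : forall (gT : finGroupType) (S : {group gT}) (p : nat),
      simple S -> prime p -> coprime #|S| p ->
      psi_normal_divisible (setX S (Zp p)).
  move=> gT S p simS pr co; apply: main_aux => //; rewrite card_Zp ?prime_gt0 //.
split; first by move=> gT S p simS _; exact: P1.
move=> p pr co; apply: P1 => //.
  by apply: simple_Alt5; rewrite card_ord.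
have h : (2 * #|'Alt_('I_5)|)%N = 120.
  by rewrite card_Alt card_ord.
have h2 : #|'Alt_('I_5)| = 60 by lia.
by rewrite h2.
Qed.
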